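(* Let $n\ge 3$ be an odd integer and let $P_n$ denote the set of odd primes $p$ with $3\le p\le n$. Let $\pi_{\mathrm{odd}}(n^2)=\pi(n^2)-1$ be the number of odd primes not exceeding $n^2$. Define $\mathrm{dup}=\sum_k \mathrm{dup}_n(k)$, the sum over odd integers $k$ with $1<k\le n^2$, and for $p\in P_n$, $B_p=\dfrac{(n^2-p)\bmod 2p+p}{2p}$. Then $$\pi_{\mathrm{odd}}(n^2)=\mathrm{dup}+\sum_{p\in P_n}B_p-\frac12-\frac{n^2}{2}\left(\sum_{p\in P_n}\frac1p-1\right).$$
   Context: For an integer $a$ and a positive integer $m$, $a \bmod m$ denotes the unique $r\in\{0,\dots,m-1\}$ with $a\equiv r\pmod m$. $\pi(x)$ is the number of primes $\le x$. For a positive integer $n$ and an odd integer $k$, let $m_n(k)$ be the number of distinct primes $p\le n$ dividing $k$, and define $\mathrm{dup}_n(k)=0$ if $m_n(k)=0$ and $\mathrm{dup}_n(k)=m_n(k)-1$ otherwise. *)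

(* Defs.v *)
From HB Require Import structures.
From mathcomp Require Import all_boot all_order all_algebra.
Set Implicit Arguments. Unset Strict Implicit. Unset Printing Implicit Defensive.
Import Order.TTheory GRing.Theory Num.Theory.

Definition prime_pi (x : nat) : nat := \sum_(p < x.+1 | prime p) 1.

Definition m_n (n k : nat) : nat := \sum_(p < n.+1 | prime p && (p %| k)) 1.

Definition dup_n (n k : nat) : nat := if m_n n k == 0 then 0 else m_n n k - 1.

Definition dup_total (n : nat) : nat :=
  \sum_(k < (n ^ 2).+1 | odd k && (1 < k)) dup_n n k.

Definition inPn (n p : nat) : bool := [&& prime p, odd p, 3 <= p & p <= n].

Definition B_p (n p : nat) : rat :=
  ((((n ^ 2)%:Z - p%:Z) %% (2 * p)%:Z)%Z + p%:Z)%:~R / (2 * p)%:R.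

(* Main.v *)
Require Import Defs.
From HB Require Import structures.
From mathcomp Require Import all_boot all_order all_algebra.
From mathcomp Require Import zify ring lra.
Import Order.TTheory GRing.Theory Num.Theory.

Lemma m0 (n k : nat) : odd k -> 1 < k -> k <= n ^ 2 ->
  (m_n n k == 0) = prime k && (n < k).
Proof.
move=> ok k1 kN; rewrite /m_n sum_nat_eq0; apply/forallP/andP.
- move=> H.
  have pk : n < pdiv k.
    rewrite ltnNge; apply/negP => hle.
    have := H (Ordinal (hle : pdiv k < n.+1)) => /=.
    by rewrite pdiv_prime // pdiv_dvd.
  have pr : prime k.
    apply: ltn_pdiv2_prime; first by lia.
    apply: (leq_ltn_trans kN).
    by rewrite ltn_exp2r.
  split => //; apply: (leq_trans pk); apply: pdiv_leq; lia.
- move=> [pk nk] i; apply/implyP => /andP [pi di].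
  move: di; rewrite dvdn_prime2 // => /eqP ik.
  have := ltn_ord i; rewrite ik; lia.
Qed.

Lemma cntC (p : nat) : odd p -> forall m,
  \sum_(k < m) (odd k && (p %| k)) = (m + p - 1) %/ (2 * p).
Proof.
move=> op; have p0 : 0 < p by case: p op.
elim=> [|m IH]; first by rewrite big_ord0 divn_small //; lia.
rewrite big_ord_recr /= IH.
have -> : m.+1 + p - 1 = (m + p - 1).+1 by lia.
rewrite divnS; last by lia.
have -> : (m + p - 1).+1 = m + p by lia.
rewrite Gauss_dvd ?coprime2n // dvdn2 oddD op addbT negbK.
rewrite (dvdn_addl _ (dvdnn p)) addnC; done.
Qed.

Lemma mnE n k : m_n n k = \sum_(p < n.+1) (prime p && (p %| k)).
Proof. by rewrite /m_n big_mkcond; apply: eq_bigr => i _; case: ifP. Qed.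

Lemma perp (n N : nat) (p : 'I_n.+1) : 3 <= n -> n <= N ->
  \sum_(k < N.+1) ((odd k && (1 < k)) * (prime p && (p %| k))) =
  inPn n p * ((N - p) %/ (2 * p)).+1.
Proof.
move=> n3 nN; have pn := ltn_ord p.
case pp: (prime p); last first.
  by rewrite /inPn pp /= big1 // => i _; rewrite muln0.
case op: (odd p); last first.
  have p2 : (p : nat) = 2 by apply/(prime_oddPn pp); rewrite op.
  rewrite /inPn op andbF /= big1 // => i _; rewrite p2.
  case oi: (odd i) => //=; rewrite dvdn2 oi /= muln0 //.
have p3 := odd_prime_gt2 op pp.
rewrite /inPn pp op p3 /= -ltnS pn mul1n.
rewrite (eq_bigr (fun k : 'I_N.+1 => (odd k && (p %| k) : nat))); last first.
  move=> [[|[|k]] hk] _ //=.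
    rewrite dvdn1; have -> : (p == 1 :> nat) = false by apply/eqP; lia.
    by [].
  by case: (odd k); case: (p %| k.+2).
rewrite cntC //.
have -> : N.+1 + p - 1 = 1 * (2 * p) + (N - p) by lia.
by rewrite divnMDl; [rewrite add1n | lia].
Qed.

Lemma Ssum (n N : nat) : 3 <= n -> n <= N ->
  \sum_(k < N.+1 | odd k && (1 < k)) m_n n k =
  \sum_(p < n.+1 | inPn n p) ((N - p) %/ (2 * p)).+1.
Proof.
move=> n3 nN.
rewrite big_mkcond.
rewrite (eq_bigr (fun k : 'I_N.+1 => \sum_(p < n.+1)
    ((odd k && (1 < k)) * (prime p && (p %| k))))); last first.
  by move=> k _; rewrite -big_distrr /= mnE; case: ifP => _; rewrite ?mul1n ?mul0n.
rewrite exchange_big /= [RHS]big_mkcond; apply: eq_bigr => p _.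
by rewrite perp //; case: (inPn n p); rewrite ?mul1n ?mul0n.
Qed.

Lemma sum_eqj m j : \sum_(i < m) ((i : nat) == j) = (j < m).
Proof.
elim: m => [|m IH]; first by rewrite big_ord0.
have -> : (j < m.+1) = (j == m) || (j < m) by rewrite ltnS leq_eqVlt.
rewrite big_ord_recr /= IH.
have [->|h] := eqVneq j m; first by rewrite ltnn.
by rewrite addn0.
Qed.

Lemma sum_odd m : \sum_(k < m) (odd k && (1 < k)) + (1 < m) = m./2.
Proof.
elim: m => [|m IH]; first by rewrite big_ord0.
rewrite big_ord_recr /= -addnA.
have -> : (odd m && (1 < m)) + (1 < m.+1) = odd m + (1 < m).
  by case: m {IH} => [|[|m]] //=; case: (odd m); rewrite /= ?addn0 ?add0n.
by rewrite addnCA IH -uphalf_half.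
Qed.

Lemma prime_split (n k : nat) : 3 <= n -> k <= n ^ 2 ->
  prime k = (k == 2) + (k < n.+1) * inPn n k
             + (odd k && (1 < k)) * (m_n n k == 0) :> nat.
Proof.
move=> n3 kN.
case pk: (prime k); last first.
  have -> : (k == 2) = false by apply/eqP => k2; rewrite k2 in pk.
  rewrite /inPn pk /= muln0.
  case h: (odd k && (1 < k)) => //; case/andP: h => ok k1.
  by rewrite m0 // pk.
case k2: (k == 2); first by move/eqP: k2 => ->; rewrite /inPn /=; case: (prime 2); rewrite /= ?muln0.
have ok : odd k by apply: contraFT k2 => /(prime_oddPn pk) ->.
have k3 := odd_prime_gt2 ok pk.
rewrite m0 //; last by lia.
rewrite /inPn pk ok k3 /= (prime_gt1 pk) /=.
case: (ltnP n k) => h; last by rewrite ltnS h /=.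
by rewrite muln0.
Qed.

Lemma pi_fact (n : nat) : 3 <= n ->
  prime_pi (n ^ 2) = 1 + \sum_(p < n.+1 | inPn n p) 1
     + \sum_(k < (n ^ 2).+1 | odd k && (1 < k)) (m_n n k == 0).
Proof.
move=> n3.
have nN : n <= n ^ 2 by rewrite -{1}(expn1 n) leq_pexp2l //; lia.
rewrite /prime_pi big_mkcond.
rewrite (eq_bigr (fun k : 'I_(n ^ 2).+1 => ((k : nat) == 2) + (k < n.+1) * inPn n k
             + (odd k && (1 < k)) * (m_n n k == 0))); last first.
  move=> k _; have := ltn_ord k; rewrite ltnS => kl; rewrite -prime_split //; by case: ifP.
rewrite !big_split /= sum_eqj.
have -> : 2 < (n ^ 2).+1 by lia.
congr (_ + _ + _).
  rewrite (big_ord_widen_cond _ _ (fun i => 1) (_ : n.+1 <= (n ^ 2).+1)) //.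
  by rewrite [RHS]big_mkcond; apply: eq_bigr => i _; rewrite andbC; case: (_ < _); case: (inPn n i).
by rewrite [RHS]big_mkcond; apply: eq_bigr => i _; case: (odd i && _); rewrite ?mul1n ?mul0n.
Qed.

Lemma dup_fact (n : nat) :
  dup_total n + \sum_(k < (n ^ 2).+1 | odd k && (1 < k)) 1 =
  \sum_(k < (n ^ 2).+1 | odd k && (1 < k)) m_n n k
  + \sum_(k < (n ^ 2).+1 | odd k && (1 < k)) (m_n n k == 0).
Proof.
rewrite /dup_total -!big_split /=; apply: eq_bigr => k _.
rewrite /dup_n; have [h|h] := eqVneq (m_n n k) 0; first by rewrite h.
by rewrite /=; lia.
Qed.

Lemma A_fact (n : nat) : odd n ->
  n ^ 2 = (\sum_(k < (n ^ 2).+1 | odd k && (1 < k)) 1) * 2 + 1.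
Proof.
move=> on.
have oN : odd (n ^ 2) by rewrite oddX on orbT.
have := sum_odd (n ^ 2).+1.
rewrite /= uphalf_half oN.
have -> : \sum_(k < (n ^ 2).+1 | odd k && (1 < k)) 1 =
          \sum_(i < (n ^ 2).+1) (odd i && (1 < i)).
  by rewrite big_mkcond; apply: eq_bigr => i _; case: ifP.
have := odd_double_half (n ^ 2); rewrite oN -muln2.
have : 1 < (n ^ 2).+1 by case: (n ^ 2) oN.
move=> -> /=; lia.
Qed.

Local Open Scope ring_scope.

Lemma Bp_fact (n p : nat) : inPn n p ->
  B_p n p = (n ^ 2)%:R / (2 * p)%:R - ((n ^ 2 - p) %/ (2 * p))%:R.
Proof.
case/and4P => pp op p3 pn.
have pN : (p <= n ^ 2)%N.
  apply: (leq_trans pn); rewrite -{1}(expn1 n) leq_pexp2l //; lia.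
rewrite /B_p subzn // modz_nat.
have -> : ((((n ^ 2 - p) %% (2 * p))%N)%:Z + p%:Z)%:~R = (((n ^ 2 - p) %% (2 * p)) + p)%N%:R :> rat.
  by rewrite -PoszD.
have hN : (n ^ 2 = (n ^ 2 - p) %/ (2 * p) * (2 * p) + (n ^ 2 - p) %% (2 * p) + p)%N.
  by rewrite -divn_eq subnK.
rewrite [in X in _ = X / _ - _]hN !natrD natrM.
have h0 : ((2 * p)%N%:R : rat) != 0 by rewrite pnatr_eq0; lia.
field.
by rewrite -natrD pnatr_eq0; lia.
Qed.

Local Close Scope ring_scope.

Theorem mainTheorem11 (n : nat) (hn3 : 3 <= n) (hodd : odd n) :
  (((prime_pi (n ^ 2))%:R - 1 : rat) =
    (dup_total n)%:R
    + \sum_(p < n.+1 | inPn n p) B_p n p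
    - 1 / 2
    - (n ^ 2)%:R / 2 * (\sum_(p < n.+1 | inPn n p) 1 / (p%:R : rat)  - 1))%R.
Proof.
have nN : n <= n ^ 2 by rewrite -{1}(expn1 n) leq_pexp2l //; lia.
have hpi := pi_fact n hn3.
have hS := Ssum n (n ^ 2) hn3 nN.
have hdup := dup_fact n.
have hA := A_fact n hodd.
set K := \sum_(p < n.+1 | inPn n p) 1 in hpi.
set Q := \sum_(p < n.+1 | inPn n p) ((n ^ 2 - p) %/ (2 * p)).
have hSQ : \sum_(p < n.+1 | inPn n p) ((n ^ 2 - p) %/ (2 * p)).+1 = Q + K.
  by rewrite /Q /K -big_split /=; apply: eq_bigr => i _; rewrite addn1.
rewrite hSQ in hS; rewrite hS in hdup.
set Z := \sum_(k < (n ^ 2).+1 | odd k && (1 < k)) (m_n n k == 0) in hpi hdup.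
set A := \sum_(k < (n ^ 2).+1 | odd k && (1 < k)) 1 in hdup hA.
have hB : (\sum_(p < n.+1 | inPn n p) B_p n p =
   \sum_(p < n.+1 | inPn n p) ((n ^ 2)%:R / 2 * (1 / (p%:R : rat))) - Q%:R)%R.
  rewrite /Q natr_sum -sumrB; apply: eq_bigr => p hp.
  rewrite Bp_fact // natrM; congr (_ - _)%R.
  have p0 : (p%:R : rat) != 0%R.
    by rewrite pnatr_eq0; case/and4P: hp => _ _ ? _; lia.
  by field.
rewrite hB -mulr_sumr hpi.
have e1 := congr1 (fun x : nat => (x%:R : rat)) hdup.
have e2 := congr1 (fun x : nat => (x%:R : rat)) hA.
move: e1 e2 => /=; rewrite !natrD !natrM /=.
set X := (\sum_(i < n.+1 | inPn n i) _)%R.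
move=> e1 e2; rewrite e2; lra.
Qed.
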